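(* Let $D$ denote the set of variable network games $(v,\rho)\in\mathbb V^N\times\mathbb P^N$ such that $v$ is component additive. Then: (i) the Expected Position Value $\Psi^p$ is an allocation rule on the class of variable network games which, on $D$, satisfies component balance and the balanced link contributions property; and (ii) if $\Psi\colon\mathbb V^N\times\mathbb P^N\to\mathbb R^N$ is any allocation rule on the class of variable network games satisfying component balance and the balanced link contributions property for all $(v,\rho)\in D$, then $\Psi(v,\rho)=\Psi^p(v,\rho)$ for all $(v,\rho)\in D$. That is, $\Psi^p$ is the unique allocation rule on the class of component additive variable network games that satisfies component balance and the balanced link contributions property.
   Context: $N=\{1,\dots,n\}$ is a finite player set. A link is an unordered pair $ij=\{i,j\}$ of distinct players; $g_N$ is the set of all links; a network is any $g\subseteq g_N$; $\mathbb G^N$ is the set of all networks. For $g\in\mathbb G^N$: $N_i(g)=\{j\ne i: ij\in g\}$, $L_i(g)=\{ij\in g\}$ (links of $i$ in $g$), $N(g)=\bigcup_i N_i(g)$, and $N_0(g)=N\setminus N(g)$ (isolated players). $g+ij=g\cup\{ij\}$, $g-ij=g\setminus\{ij\}$. A component of $g$ is a nonempty subnetwork $h\subseteq g$ that is connected (any two players of $N(h)$ are joined by a path in $h$) and maximal (if $i\in N(h)$ and $ij\in g$ then $ij\in h$); $C(g)$ is the set of components of $g$. A network formation probability distribution is a map $\rho\colon\mathbb G^N\to[0,1]$ with $\sum_g\rho(g)=1$; $\mathbb P^N$ is the set of these. $\mathbb G(\rho)=\{g:\rho(g)>0\}$, and the extent is $g(\rho)=\bigcup_{g\in\mathbb G(\rho)}g$.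 For a network $g$, the restriction $\rho_g\in\mathbb P^N$ is $\rho_g(h)=\sum_{h'\subseteq g_N\setminus g}\rho(h\cup h')$ if $h\subseteq g$ and $\rho_g(h)=0$ otherwise. For a link $ij$, $\rho^{-ij}=\rho_{g_N-ij}$. A network game is $v\colon\mathbb G^N\to\mathbb R$ with $v(\varnothing)=0$; $\mathbb V^N$ is the set of these. $v$ is component additive if $v(g)=\sum_{h\in C(g)}v(h)$ for all $g$. A variable network game is a pair $(v,\rho)\in\mathbb V^N\times\mathbb P^N$. An allocation rule on the class of variable network games is a map $\Psi\colon\mathbb V^N\times\mathbb P^N\to\mathbb R^N$ with $\Psi_i(v,\rho)=0$ for every $i\in N_0(g(\rho))$. It is component balanced (on $(v,\rho)$ with $v$ component additive) if for every $h\in C(g(\rho))$: $\sum_{i\in N(h)}\Psi_i(v,\rho)=\sum_{g\in\mathbb G(\rho)}\rho(g)\,v(g\cap h)$. It satisfies the balanced link contributions property if for all players $i\neq j$: $\sum_{jk\in L_j(g(\rho))}[\Psi_i(v,\rho)-\Psi_i(v,\rho^{-jk})]=\sum_{ik\in L_i(g(\rho))}[\Psi_j(v,\rho)-\Psi_j(v,\rho^{-ik})]$. The Position Value for network games is $Y^p_i(v,g)=\tfrac12\sum_{ij\in g}\sum_{h\subseteq g-ij}\frac{\#h!\,(\#g-\#h-1)!}{\#g!}\,(v(h+ij)-v(h))$. The Expected Position Value is $\Psi^p(v,\rho)=\sum_{g\in\mathbb G^N}\rho(g)\,Y^p(v,g)$. *)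

(* Defs.v *)
From HB Require Import structures.
From mathcomp Require Import all_boot all_order all_algebra.
Set Implicit Arguments. Unset Strict Implicit. Unset Printing Implicit Defensive.
Import Order.TTheory GRing.Theory Num.Theory.
Local Open Scope ring_scope.

(* Players N = {1,...,n} are represented by 'I_n.
   A link is an unordered pair {i,j} of distinct players: a 2-element subset. *)
Definition link (n : nat) := {s : {set 'I_n} | #|s| == 2%N}.

(* A network is any set of links; the complete network g_N is [set: link n]. *)
Definition network (n : nat) := {set link n}.

Section Defs.
Variables (n : nat) (R : realFieldType).

Definition nbrs (g : network n) (i : 'I_n) : {set 'I_n} :=
  [set j | (j != i) && [exists l in g, val l == [set i; j]]].
Definition links_of (g : network n) (i : 'I_n) : network n :=
  [set l in g | i \in val l].
Definition players (g : network n) : {set 'I_n} :=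
  \bigcup_(i : 'I_n) nbrs g i.
Definition isolated (g : network n) : {set 'I_n} := ~: players g.

Definition adj (h : network n) : rel 'I_n :=
  fun i j => [exists l in h, val l == [set i; j]] && (i != j).

Definition is_component (g h : network n) : bool :=
  [&& h != set0, h \subset g,
      [forall i in players h, forall j in players h, connect (adj h) i j] &
      [forall i in players h, forall l in g, (i \in val l) ==> (l \in h)]].
Definition components (g : network n) : {set network n} :=
  [set h | is_component g h].

Definition is_game (v : network n -> R) : Prop := v set0 = 0.
Definition component_additive (v : network n -> R) : Prop :=
  forall g, v g = \sum_(h in components g) v h.

Definition is_prob (rho : network n -> R) : Prop :=
  (forall g, 0 <= rho g <= 1) /\ \sum_(g : network n) rho g = 1.

Definition extent (rho : network n -> R) : network n :=
  \bigcup_(g : network n | 0 < rho g) g.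

Definition restrict (rho : network n -> R) (g : network n) : network n -> R :=
  fun h => if h \subset g then
             \sum_(h' : network n | h' \subset ~: g) rho (h :|: h')
           else 0.

Definition remove_link (rho : network n -> R) (l : link n) : network n -> R :=
  restrict rho ([set: link n] :\ l).

Definition alloc := (network n -> R) -> (network n -> R) -> 'I_n -> R.

Definition is_allocation_rule (Psi : alloc) : Prop :=
  forall v rho, is_game v -> is_prob rho ->
    forall i, i \in isolated (extent rho) -> Psi v rho i = 0.

Definition in_D (v rho : network n -> R) : Prop :=
  [/\ is_game v, is_prob rho & component_additive v].

Definition component_balanced (Psi : alloc) (v rho : network n -> R) : Prop :=
  forall h, h \in components (extent rho) ->
    \sum_(i in players h) Psi v rho i =
    \sum_(g : network n | 0 < rho g) rho g * v (g :&: h).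

Definition balanced_link_contributions (Psi : alloc) (v rho : network n -> R)
  : Prop :=
  forall i j : 'I_n, i != j ->
    \sum_(l in links_of (extent rho) j)
       (Psi v rho i - Psi v (remove_link rho l) i) =
    \sum_(l in links_of (extent rho) i)
       (Psi v rho j - Psi v (remove_link rho l) j).

Definition position_value (v : network n -> R) (g : network n) (i : 'I_n) : R :=
  2^-1 * \sum_(l in links_of g i)
     \sum_(h : network n | h \subset g :\ l)
        ((#|h|`!)%:R * ((#|g| - #|h| - 1)`!)%:R / (#|g|`!)%:R)
          * (v (l |: h) - v h).

Definition expected_position_value : alloc :=
  fun v rho i => \sum_(g : network n) rho g * position_value v g i.

End Defs.

(* Main.v *)
Require Import Defs.
From HB Require Import structures.
From mathcomp Require Import all_boot all_order all_algebra.
From mathcomp Require Import ring lra zify.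
Import Order.TTheory GRing.Theory Num.Theory.
Local Open Scope ring_scope.
Set Implicit Arguments. Unset Strict Implicit. Unset Printing Implicit Defensive.

Section Graph.
Variable n : nat.
Implicit Types (g h C : network n) (l a b : link n) (x y i j : 'I_n).

Lemma link2 l : exists x y, x != y /\ val l = [set x; y].
Proof. by apply/cards2P; case: l. Qed.

Lemma in_players g x : (x \in players g) = [exists l in g, x \in val l].
Proof.
apply/bigcupP/existsP => [[i _]|[l /andP[lg xl]]].
  rewrite inE => /andP[_ /existsP[l /andP[lg /eqP E]]].
  by exists l; rewrite lg E !inE eqxx orbT.
have [a [b [ab E]]] := link2 l.
move: xl; rewrite E !inE => /orP[]/eqP ->.
  exists b => //; rewrite inE ab /=; apply/existsP; exists l.
  by rewrite lg E setUC eqxx.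
exists a => //; rewrite inE eq_sym ab /=; apply/existsP; exists l.
by rewrite lg E eqxx.
Qed.

Lemma playersP g x : reflect (exists2 l, l \in g & x \in val l) (x \in players g).
Proof.
rewrite in_players; apply: (iffP existsP) => [[l /andP[]]|[l lg xl]].
  by exists l.
by exists l; rewrite lg xl.
Qed.

Lemma players_sub g h : g \subset h -> players g \subset players h.
Proof.
move=> gh; apply/subsetP => x /playersP[l lg xl]; apply/playersP.
by exists l => //; apply: (subsetP gh).
Qed.

Lemma adj_sym g : symmetric (adj g).
Proof.
move=> x y; rewrite /adj eq_sym setUC; done.
Qed.

Lemma adj_sub g h : g \subset h -> forall x y, adj g x y -> adj h x y.
Proof.
move=> gh x y /andP[/existsP[l /andP[lg E]] xy]; rewrite /adj xy andbT.
by apply/existsP; exists l; rewrite (subsetP gh) .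
Qed.

Lemma adj_link g l x y : l \in g -> val l = [set x; y] -> x != y -> adj g x y.
Proof. by move=> lg E xy; rewrite /adj xy andbT; apply/existsP; exists l; rewrite lg E eqxx. Qed.

Lemma is_componentP g h :
  reflect [/\ h != set0, h \subset g,
     (forall x y, x \in players h -> y \in players h -> connect (adj h) x y) &
     (forall x l, x \in players h -> l \in g -> x \in val l -> l \in h)]
    (is_component g h).
Proof.
rewrite /is_component; apply: (iffP and4P) => [[h0 hg /forallP c /forallP cl]|[h0 hg c cl]]; split => //.
- move=> x y xh yh; move: (c x); rewrite xh => /= /forallP/(_ y).
  by rewrite yh.
- move=> x l xh lg xl; move: (cl x); rewrite xh => /= /forallP/(_ l).
  by rewrite lg xl.
- apply/forallP => x; apply/implyP => xh; apply/forallP => y; apply/implyP.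
  exact: c.
- apply/forallP => x; apply/implyP => xh; apply/forallP => l; apply/implyP => lg.
  apply/implyP; exact: cl.
Qed.


Lemma player_of g l x : l \in g -> x \in val l -> x \in players g.
Proof. by move=> lg xl; apply/playersP; exists l. Qed.

Lemma comp_side g1 g2 C l0 :
  (forall x, x \in players g1 -> x \notin players g2) ->
  is_component (g1 :|: g2) C -> l0 \in C -> l0 \in g1 -> is_component g1 C.
Proof.
move=> dj /is_componentP[C0 Cg conn cl] l0C l0g1.
have clA : closed (adj C) (players g1).
  move=> x y /andP[/existsP[l /andP[lC /eqP E]] xy].
  have lg := subsetP Cg l lC; have xl : x \in val l by rewrite E !inE eqxx.
  have yl : y \in val l by rewrite E !inE eqxx orbT.
  move: lg; rewrite inE => /orP[lg|lg].
    by rewrite (player_of lg xl) (player_of lg yl).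
  apply/idP/idP => H.
    by move: (dj _ H); rewrite (player_of lg xl).
  by move: (dj _ H); rewrite (player_of lg yl).
have [x0 [y0 [_ E0]]] := link2 l0.
have x0l0 : x0 \in val l0 by rewrite E0 !inE eqxx.
have sub : C \subset g1.
  apply/subsetP => l lC; have [x [y [_ E]]] := link2 l.
  have xl : x \in val l by rewrite E !inE eqxx.
  have cx := conn x0 x (player_of l0C x0l0) (player_of lC xl).
  have := closed_connect clA cx; rewrite (player_of l0g1 x0l0) => /esym xg1.
  have := subsetP Cg l lC; rewrite inE => /orP[//|lg2].
  by move: (dj _ xg1); rewrite (player_of lg2 xl).
apply/is_componentP; split => // x l xC lg1 xl.
by apply: (cl x l xC) => //; rewrite inE lg1.
Qed.

Lemma comp_lift g1 g2 C :
  (forall x, x \in players g1 -> x \notin players g2) ->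
  is_component g1 C -> is_component (g1 :|: g2) C.
Proof.
move=> dj /is_componentP[C0 Cg conn cl]; apply/is_componentP; split => //.
  by apply: subset_trans Cg _; apply: subsetUl.
move=> x l xC; rewrite inE => /orP[lg|lg] xl; first exact: cl xC lg xl.
have xg1 : x \in players g1 := subsetP (players_sub Cg) x xC.
by move: (dj _ xg1); rewrite (player_of lg xl).
Qed.

Lemma components_split g1 g2 :
  (forall x, x \in players g1 -> x \notin players g2) ->
  components (g1 :|: g2) = components g1 :|: components g2 /\
  [disjoint components g1 & components g2].
Proof.
move=> dj.
have dj' : forall x, x \in players g2 -> x \notin players g1.
  by move=> x H; apply/negP => /dj; rewrite H.
split.
  apply/setP => C; rewrite !inE; apply/idP/idP.
    move=> Cc; have := Cc => /is_componentP[C0 _ _ _].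
    have [l0 l0C] := set0Pn _ C0.
    have := Cc => /is_componentP[_ Cg _ _].
    move: (subsetP Cg l0 l0C); rewrite inE => /orP[l0g|l0g].
      by rewrite (comp_side dj Cc l0C l0g).
    by rewrite setUC in Cc; rewrite (comp_side dj' Cc l0C l0g) orbT.
  case/orP => Cc; first exact: comp_lift.
  by rewrite setUC; apply: comp_lift.
apply/pred0P => C /=; apply/negP; rewrite !inE => /andP[/is_componentP[C0 C1 _ _] /is_componentP[_ C2 _ _]].
have [l0 l0C] := set0Pn _ C0; have [x [y [_ E]]] := link2 l0.
have xl : x \in val l0 by rewrite E !inE eqxx.
by move: (dj x (player_of (subsetP C1 _ l0C) xl)); rewrite (player_of (subsetP C2 _ l0C) xl).
Qed.

Lemma ca_split (R : realFieldType) (v : network n -> R) E h (S : network n) :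
  component_additive v -> h \in components E -> S \subset E ->
  v S = v (S :&: h) + v (S :\: h).
Proof.
move=> ca; rewrite inE => /is_componentP[_ hE _ cl] SE.
have dj : forall x, x \in players (S :&: h) -> x \notin players (S :\: h).
  move=> x /playersP[l lSh xl]; apply/negP => /playersP[l' lSh' xl'].
  move: lSh lSh'; rewrite !inE => /andP[lS lh] /andP[nl'h l'S].
  have xh : x \in players h := player_of lh xl.
  by move: (cl x l' xh (subsetP SE _ l'S) xl'); rewrite (negbTE nl'h).
have [Ec Ed] := components_split dj.
rewrite {1}(ca S) -{1}(setID S h) Ec (ca (S :&: h)) (ca (S :\: h)).
rewrite -bigU //; apply: eq_bigl => C; by rewrite !inE.
Qed.


Definition connb h := [forall x in players h, forall y in players h, connect (adj h) x y].

Lemma connb_from h x0 : (forall p, p \in players h -> connect (adj h) x0 p) -> connb h.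
Proof.
move=> H; apply/forallP => x; apply/implyP => xh; apply/forallP => y; apply/implyP => yh.
apply: (connect_trans (y := x0)); last exact: H.
by rewrite (sym_connect_sym (@adj_sym h)); exact: H.
Qed.

Lemma exists_comp E i : i \in players E -> exists2 h, h \in components E & i \in players h.
Proof.
move=> /playersP[l0 l0E il0].
pose P := fun h => [&& h \subset E, connb h & i \in players h].
have P0 : P [set l0].
  rewrite /P sub1set l0E (player_of (set11 l0) il0) andbT.
  have [a [b [ab Eab]]] := link2 l0.
  apply: (connb_from (x0 := a)) => p /playersP[l]; rewrite inE => /eqP -> .
  rewrite Eab !inE => /orP[]/eqP ->; first exact: connect0.
  by apply: connect1; apply: (adj_link (l := l0)); rewrite ?inE.
case: (arg_maxnP (fun h => #|h|) P0) => h /and3P[hE /forallP c ih] hmax.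
exists h => //; rewrite inE; apply/is_componentP; split => //.
- by apply/set0Pn; case/playersP: ih => l lh _; exists l.
- move=> x y xh yh; move: (c x); rewrite xh => /= /forallP/(_ y); by rewrite yh.
move=> x l xh lE xl; apply/negPn/negP => lh.
have : P (l |: h).
  rewrite /P subUset sub1set lE hE /=.
  rewrite (subsetP (players_sub (subsetUr [set l] h)) _ ih) andbT.
  apply: (connb_from (x0 := x)) => p /playersP[l']; rewrite !inE => /orP[/eqP ->|l'h] pl'.
    have [a [b [ab Eab]]] := link2 l.
    have : (x == p) || adj (l |: h) x p.
      have l1 : l \in l |: h by rewrite setU11.
      move: xl pl'; rewrite Eab !inE => /orP[]/eqP -> /orP[]/eqP ->; rewrite ?eqxx //.
        by rewrite (adj_link l1 Eab ab) orbT.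
      have Eba : val l = [set b; a] by rewrite Eab setUC.
      by rewrite (adj_link l1 Eba) ?orbT // eq_sym.
    by case/orP => [/eqP ->|]; [exact: connect0 | exact: connect1].
  move: (c x); rewrite xh => /= /forallP/(_ p); rewrite (player_of l'h pl') /=.
  apply: connect_sub => a b ab; apply: connect1; apply: adj_sub ab.
  exact: subsetUr.
move=> /hmax; rewrite cardsU1 lh /=; by rewrite ltnn.
Qed.

End Graph.
Section Num.
Variable R : realFieldType.
Definition coef (k s : nat) : R := (s`!)%:R * ((k - s - 1)`!)%:R / (k`!)%:R.
Definition wt (k s : nat) : R := ((s.-1)`!)%:R * ((k - s)`!)%:R / (k`!)%:R.

Lemma fact_neq0 k : (k`!)%:R != 0 :> R.
Proof. by rewrite pnatr_eq0 -lt0n fact_gt0. Qed.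

Lemma N1 k s : wt k s.+1 = coef k s.
Proof. by rewrite /wt /coef subnS subn1. Qed.

Lemma N2 k s : (0 < s)%N -> (s < k)%N -> wt k s - wt k.-1 s = - coef k s.
Proof.
case: s => // t _ lt; have -> : k = (k - t.+2 + t.+1).+1 by lia.
set m := (k - t.+2)%N.
rewrite /wt /coef /=.
have -> : ((m + t.+1).+1 - t.+1 = m.+1)%N by lia.
have -> : ((m + t.+1) - t.+1 = m)%N by lia.
rewrite subn1 /= (factS m) (factS t) (factS (m + t.+1)) !natrM.
have h1 := fact_neq0 (m + t.+1); have h2 := fact_neq0 m; have h3 := fact_neq0 t.
rewrite -[(m + t.+1).+1]addn1 -addSnnS !natrD /=.
field; rewrite h1 /=; apply/negP => /eqP; have := ler0n R m; have := ler0n R t; lra.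
Qed.

Lemma N3 k s : (s < k)%N -> k%:R * wt k s = (k - s)%:R * wt k.-1 s.
Proof.
move=> lt; have -> : k = (k - s.+1 + s).+1 by lia.
set m := (k - s.+1)%N.
rewrite /wt /=.
have -> : ((m + s).+1 - s = m.+1)%N by lia.
have -> : ((m + s) - s = m)%N by lia.
rewrite (factS m) (factS (m + s)) !natrM.
have h1 := fact_neq0 (m + s); have h2 := fact_neq0 m.
field; rewrite h1 /=; apply/negP => /eqP; have := ler0n R m; have := ler0n R s.
lra.
Qed.

Lemma N4 k : (0 < k)%N -> k%:R * wt k k = 1.
Proof.
case: k => // k _; rewrite /wt subnn /= factS natrM.
have h1 := fact_neq0 k; rewrite fact0; field; rewrite h1 /=; apply/negP => /eqP; have := ler0n R k; lra.
Qed.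

End Num.

Section Shap.
Variables (n : nat) (R : realFieldType).
Implicit Types (g h S : network n) (a b l : link n) (u : network n -> R).

Lemma split_sub a (P : pred (network n)) (F : network n -> R) :
  \sum_(S | P S && (a \in S)) F S = \sum_(S | P (a |: S) && (a \notin S)) F (a |: S).
Proof.
rewrite (reindex_onto (fun S => a |: S) (fun S => S :\ a)) /=; last first.
  by move=> S /andP[_ aS]; rewrite setD1K.
apply: eq_bigl => S; rewrite setU11 andbT.
case aS: (a \in S) => /=.
  rewrite andbF; apply/negbTE; rewrite negb_and; apply/orP; right; apply/eqP => E; move: aS; rewrite -E.
  by rewrite setD11.
by rewrite andbT setU1K ?aS // eqxx andbT.
Qed.

Definition Sh u g a := \sum_(h : network n | h \subset g :\ a) coef R #|g| #|h| * (u (a |: h) - u h).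
Definition pot u g := \sum_(S : network n | S \subset g) wt R #|g| #|S| * u S.

Lemma pot_Sh u g a : u set0 = 0 -> a \in g -> Sh u g a = pot u g - pot u (g :\ a).
Proof.
move=> u0 ag.
have cg : #|g| = #|g :\ a|.+1 by rewrite (cardsD1 a g) ag.
rewrite /pot (bigID (fun S => a \in S)) /= split_sub.
have e1 : forall S, (a |: S \subset g) && (a \notin S) = (S \subset g :\ a).
  by move=> S; rewrite subsetD1 subUset sub1set ag.
have e2 : forall S, (S \subset g) && (a \notin S) = (S \subset g :\ a).
  by move=> S; rewrite subsetD1.
rewrite (eq_bigl _ _ e1) (eq_bigl _ _ e2) /Sh -addrA -sumrB -big_split /=.
apply: eq_bigr => S sS.
have aS : a \notin S by move: sS; rewrite subsetD1 => /andP[].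
have sl : (#|S| < #|g|)%N by rewrite cg ltnS subset_leq_card.
rewrite cardsU1 aS add1n N1 -mulrBl.
case: (posnP #|S|) => [/eqP|] s0.
  rewrite cards_eq0 in s0; rewrite (eqP s0) u0 !mulr0 subr0.
  by rewrite addr0.
have -> : #|g :\ a| = (#|g|).-1 by rewrite cg.
rewrite N2 // mulNr mulrBr; done.
Qed.

Lemma pot_eff u g : u set0 = 0 -> \sum_(a in g) (pot u g - pot u (g :\ a)) = u g.
Proof.
move=> u0; rewrite sumrB sumr_const.
have E : \sum_(a in g) pot u (g :\ a) =
   \sum_(S : network n | S \subset g) (#|g| - #|S|)%N%:R * (wt R (#|g|).-1 #|S| * u S).
  rewrite /pot.
  transitivity (\sum_(a in g) \sum_(S : network n | S \subset g)
      (if a \notin S then wt R (#|g|).-1 #|S| * u S else 0)).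
    apply: eq_bigr => a ag; rewrite -big_mkcondr /=.
    have -> : #|g :\ a| = (#|g|).-1 by rewrite (cardsD1 a g) ag.
    by apply: eq_bigl => S; rewrite subsetD1.
  rewrite exchange_big /=; apply: eq_bigr => S sS.
  rewrite -big_mkcondr /= sumr_const mulr_natl.
  congr (_ *+ _).
  have -> : #|S| = #|g :&: S| by rewrite (setIidPr sS).
  by rewrite -cardsD; apply: eq_card => a; rewrite !inE andbC.
rewrite E /pot -mulr_natl mulr_sumr -sumrB.
rewrite (bigD1 g) //= big1 ?addr0; last first.
  move=> S /andP[sS nSg].
  have lt : (#|S| < #|g|)%N.
    rewrite ltn_neqAle subset_leq_card // andbT; apply: contra nSg => /eqP c; by rewrite eqEcard sS c leqnn.
  by rewrite (mulrA (#|g|%:R)) (N3 R lt) -mulrA subrr.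
rewrite subnn mul0r subr0.
case: (posnP #|g|) => g0.
  have g0' : g = set0 by apply/eqP; rewrite -cards_eq0 g0.
  by rewrite g0' u0 !mulr0.
by rewrite (mulrA (#|g|%:R)) (N4 R g0) mul1r.
Qed.

End Shap.

Section PV.
Variables (n : nat) (R : realFieldType).
Implicit Types (g h G S : network n) (a b l : link n) (v : network n -> R).

Definition Sh' v g a := if a \in g then Sh v g a else 0.

Lemma pv_eq v g i : position_value v g i = 2^-1 * \sum_(l in links_of g i) Sh v g l.
Proof. by []. Qed.

Lemma pv_alt v g G i : g \subset G ->
  position_value v g i = 2^-1 * \sum_(a in links_of G i) Sh' v g a.
Proof.
move=> gG; rewrite pv_eq; congr (_ * _); rewrite /Sh' -big_mkcondr.
apply: eq_bigl => a; rewrite !inE; case ag: (a \in g); last by rewrite andbF.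
by rewrite (subsetP gG _ ag) andbT.
Qed.

Lemma D_sym v g a b : v set0 = 0 ->
  Sh' v g a - Sh' v (g :\ b) a = Sh' v g b - Sh' v (g :\ a) b.
Proof.
move=> v0; have [->|ab] := eqVneq a b; first by [].
rewrite /Sh' !in_setD1 ab (eq_sym b a) ab /=.
case ag: (a \in g); case bg: (b \in g) => /=.
- rewrite !pot_Sh // ?in_setD1 ?ab ?ag ?bg ?(eq_sym b a) ?ab //.
  rewrite !setDDl setUC; ring.
- have -> : g :\ b = g by apply/setP => x; rewrite !inE; case: eqP => // ->; rewrite bg andbF.
  by rewrite !subrr.
- have -> : g :\ a = g by apply/setP => x; rewrite !inE; case: eqP => // ->; rewrite ag andbF.
  by rewrite !subrr.
- by [].
Qed.

Lemma pv_blc v g G i j : v set0 = 0 -> g \subset G ->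
  \sum_(l in links_of G j) (position_value v g i - position_value v (g :\ l) i) =
  \sum_(l in links_of G i) (position_value v g j - position_value v (g :\ l) j).
Proof.
move=> v0 gG.
have gG' : forall l, g :\ l \subset G by move=> l; apply: subset_trans gG; apply: subsetDl.
have E : forall i' l, position_value v g i' - position_value v (g :\ l) i' =
   2^-1 * \sum_(a in links_of G i') (Sh' v g a - Sh' v (g :\ l) a).
  by move=> i' l; rewrite (pv_alt _ _ gG) (pv_alt _ _ (gG' l)) -mulrBr sumrB.
under eq_bigr do rewrite E.
under [RHS]eq_bigr do rewrite E.
rewrite -!mulr_sumr exchange_big /=; congr (_ * _).
apply: eq_bigr => a _; apply: eq_bigr => b _; exact: D_sym.
Qed.

End PV.

Section EPV.
Variables (n : nat) (R : realFieldType).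
Implicit Types (g h G S : network n) (a b l : link n) (v rho : network n -> R).

Lemma sum_split_link l (F : network n -> R) :
  \sum_(g : network n) F g = \sum_(g : network n | l \notin g) (F g + F (l |: g)).
Proof.
rewrite (bigID (fun g => l \in g)) /= addrC big_split /=; congr (_ + _).
have := split_sub l (fun _ => true) F; rewrite /=.
by move=> H; rewrite (eq_bigl _ _ (fun g => erefl (l \in g))) H.
Qed.

Lemma remove_link_eq rho l g :
  remove_link rho l g = if l \in g then 0 else rho g + rho (l |: g).
Proof.
rewrite /remove_link /restrict subsetD1 subsetT /=.
case lg: (l \in g) => //=.
rewrite setCD setCT set0U.
rewrite (bigID (fun h' => l \in h')) /= addrC; congr (_ + _).
  rewrite (big_pred1 set0) ?setU0 // => h'; rewrite /= -subsetD1 setDv subset0.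
  by [].
rewrite (big_pred1 [set l]) ?(setUC g) // => h' /=.
rewrite eqEsubset sub1set; by [].
Qed.

Lemma setD1_notin l g : l \notin g -> g :\ l = g.
Proof. by move=> lg; apply/setP => x; rewrite !inE; case: eqP => // ->; rewrite (negbTE lg). Qed.

Lemma epv_remove v rho l i :
  expected_position_value v (remove_link rho l) i =
  \sum_(g : network n) rho g * position_value v (g :\ l) i.
Proof.
rewrite /expected_position_value (sum_split_link l (fun g => rho g * _)).
rewrite (bigID (fun g => l \in g)) /= big1 ?add0r; last first.
  by move=> g lg; rewrite remove_link_eq lg mul0r.
apply: eq_bigr => g lg; rewrite remove_link_eq (negbTE lg) setU1K // setD1_notin //.
by rewrite mulrDl.
Qed.

Lemma supp_ext rho g : 0 < rho g -> g \subset extent rho.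
Proof. by move=> H; apply: (bigcup_sup g). Qed.

Lemma prob_remove rho l : is_prob rho -> is_prob (remove_link rho l).
Proof.
move=> [r01 r1].
have nn : forall g, 0 <= remove_link rho l g.
  move=> g; rewrite remove_link_eq; case: ifP => // _.
  by apply: addr_ge0; [case/andP: (r01 g) | case/andP: (r01 (l |: g))].
have s1 : \sum_(g : network n) remove_link rho l g = 1.
  rewrite -r1 (sum_split_link l rho) (bigID (fun g => l \in g)) /= big1 ?add0r.
    by apply: eq_bigr => g lg; rewrite remove_link_eq (negbTE lg).
  by move=> g lg; rewrite remove_link_eq lg.
split => // g; rewrite nn /= -s1 (bigD1 g) //= lerDl.
by apply: sumr_ge0 => g' _; exact: nn.
Qed.

Lemma ext_remove rho l : is_prob rho -> extent (remove_link rho l) \subset extent rho :\ l.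
Proof.
move=> [r01 _]; apply/bigcupsP => g; rewrite remove_link_eq.
case: ifP => lg; first by rewrite ltxx.
move=> pos; rewrite subsetD1 lg andbT.
have := r01 g => /andP[a0 _]; have := r01 (l |: g) => /andP[b0 _].
have [ga|ga] := boolP (0 < rho g); first exact: supp_ext.
have : 0 < rho (l |: g).
  rewrite lt_def b0 andbT; apply/negP => /eqP E; move: pos; rewrite E addr0.
  by move=> p; move/negP: ga; apply.
move=> /supp_ext; apply: subset_trans; exact: subsetUr.
Qed.

End EPV.

Section Main.
Variables (n : nat) (R : realFieldType).
Implicit Types (g h E S : network n) (l : link n) (v rho : network n -> R).

Lemma cb_pv v E h g : v set0 = 0 -> component_additive v -> h \in components E ->
  g \subset E -> \sum_(i in players h) position_value v g i = v (g :&: h).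
Proof.
move=> v0 ca hc gE.
have := hc; rewrite inE => /is_componentP[_ hE _ cl].
under eq_bigr do rewrite pv_eq.
rewrite -mulr_sumr.
transitivity (2^-1 * \sum_(l in g) (if l \in h then Sh v g l *+ 2 else 0)).
  congr (_ * _).
  transitivity (\sum_(i in players h) \sum_(l in g) (if i \in val l then Sh v g l else 0)).
    apply: eq_bigr => i _; rewrite -big_mkcondr; apply: eq_bigl => l.
    by rewrite !inE.
  rewrite exchange_big /=; apply: eq_bigr => l lg.
  case: ifP => lh.
    have c2 : #|val l| = 2%N := eqP (valP l).
    rewrite -big_mkcondr /=; transitivity (\sum_(i in val l) Sh v g l); last by rewrite sumr_const c2.
    apply: eq_bigl => i; case il: (i \in val l); last by rewrite andbF.
    by rewrite (player_of lh il).
  apply: big1 => i ih; case: ifP => // il.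
  by move: (cl i l ih (subsetP gE _ lg) il); rewrite lh.
rewrite -big_mkcondr /= mulr_sumr.
have h2 : forall x : R, 2^-1 * (x *+ 2) = x.
  by move=> x; rewrite mulr2n; field.
under eq_bigr do rewrite h2.
pose u1 := fun S => v (S :&: h).
pose u2 := fun S => v (S :\: h).
have spl : forall S, S \subset g -> v S = u1 S + u2 S.
  move=> S Sg; apply: (ca_split ca hc); exact: subset_trans Sg gE.
have ShD : forall l, l \in g -> Sh v g l = Sh u1 g l + Sh u2 g l.
  move=> l lg; rewrite /Sh -big_split; apply: eq_bigr => S sS /=.
  have Sg : S \subset g by apply: subset_trans sS (subsetDl _ _).
  have lSg : l |: S \subset g by rewrite subUset sub1set lg Sg.
  rewrite (spl _ Sg) (spl _ lSg); ring.
have u10 : u1 set0 = 0 by rewrite /u1 set0I v0.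
transitivity (\sum_(l in g) Sh u1 g l); last first.
  rewrite (_ : v (g :&: h) = u1 g) // -(pot_eff g u10).
  by apply: eq_bigr => l lg; rewrite pot_Sh.
rewrite [RHS](bigID (fun l => l \in h)) /= [X in _ = _ + X]big1 ?addr0; last first.
  move=> l /andP[lg lh]; apply: big1 => S _; rewrite /u1.
  have -> : (l |: S) :&: h = S :&: h.
    apply/setP => x; rewrite !inE; case: eqP => [->|_] //=; by rewrite (negbTE lh) !andbF.
  by rewrite subrr mulr0.
apply: eq_bigr => l /andP[lg lh]; rewrite ShD // [X in _ + X = _]big1 ?addr0 // => S _; rewrite /u2.
have -> : (l |: S) :\: h = S :\: h.
  apply/setP => x; rewrite !inE; case: eqP => [->|_] //=; by rewrite lh.
by rewrite subrr mulr0.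
Qed.

Lemma epv_alloc : is_allocation_rule (@expected_position_value n R).
Proof.
move=> v rho _ [r01 _] i; rewrite inE => iso.
rewrite /expected_position_value big1 // => g _.
have := r01 g => /andP[g0 _].
have [->|nz] := eqVneq (rho g) 0; first by rewrite mul0r.
have pos : 0 < rho g by rewrite lt_def nz g0.
rewrite pv_eq (_ : links_of g i = set0) ?big_set0 ?mulr0 ?mulr0 //.
apply/setP => l; rewrite !inE; apply/negP => /andP[lg il].
by move/negP: iso; apply; apply: (player_of (subsetP (supp_ext pos) l lg) il).
Qed.

Lemma epv_cb_blc v rho : in_D v rho ->
  component_balanced (@expected_position_value n R) v rho /\
  balanced_link_contributions (@expected_position_value n R) v rho.
Proof.
case=> v0 [r01 _] ca; split.
  move=> h hc; rewrite /expected_position_value exchange_big /= [RHS]big_mkcond.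
  apply: eq_bigr => g _; rewrite -mulr_sumr.
  have := r01 g => /andP[g0 _].
  case: ifP => pos; first by rewrite (cb_pv v0 ca hc (supp_ext pos)).
  have -> : rho g = 0 by apply/eqP; rewrite eq_le g0 andbT leNgt pos.
  by rewrite mul0r.
move=> i j _.
have E : forall i' l, expected_position_value v rho i' -
            expected_position_value v (remove_link rho l) i' =
     \sum_(g : network n) rho g * (position_value v g i' - position_value v (g :\ l) i').
  move=> i' l; rewrite epv_remove /expected_position_value -sumrB.
  by apply: eq_bigr => g _; rewrite mulrBr.
under eq_bigr do rewrite E.
under [RHS]eq_bigr do rewrite E.
rewrite exchange_big [RHS]exchange_big /=; apply: eq_bigr => g _.
rewrite -!mulr_sumr.
have := r01 g => /andP[g0 _].
have [->|nz] := eqVneq (rho g) 0; first by rewrite !mul0r.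
have pos : 0 < rho g by rewrite lt_def nz g0.
by rewrite (pv_blc _ _ v0 (supp_ext pos)).
Qed.

Lemma step (Psi : alloc n R) v rho :
  is_allocation_rule Psi ->
  (forall v rho, in_D v rho -> component_balanced Psi v rho /\ balanced_link_contributions Psi v rho) ->
  in_D v rho ->
  (forall l, l \in extent rho -> forall i, Psi v (remove_link rho l) i =
                                     expected_position_value v (remove_link rho l) i) ->
  forall i, Psi v rho i = expected_position_value v rho i.
Proof.
move=> alloc H D IH i.
have [v0 pr ca] := D.
have [cbP blcP] := H v rho D.
have [cbE blcE] := epv_cb_blc D.
set d := fun j => Psi v rho j - expected_position_value v rho j.
apply/eqP; rewrite -subr_eq0; apply/eqP; rewrite -/(d i).
have [ip|ni] := boolP (i \in players (extent rho)); last first.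
  have iso : i \in isolated (extent rho) by rewrite inE.
  by rewrite /d (alloc _ _ v0 pr _ iso) (epv_alloc v0 pr iso) subrr.
have [h hc ih] := exists_comp ip.
set L := fun j => #|links_of (extent rho) j|.
have key : forall j, (L j)%:R * d i = (L i)%:R * d j.
  move=> j; have [->//|ij] := eqVneq i j.
  have B1 := blcP i j ij; have B2 := blcE i j ij.
  have X : forall a b, \sum_(l in links_of (extent rho) b) d a =
      \sum_(l in links_of (extent rho) b) (Psi v rho a - Psi v (remove_link rho l) a) -
      \sum_(l in links_of (extent rho) b) (expected_position_value v rho a -
                         expected_position_value v (remove_link rho l) a).
    move=> a b; rewrite -sumrB; apply: eq_bigr => l; rewrite inE => /andP[lE _].
    rewrite IH // /d; ring.
  have := X i j; rewrite B1 B2 -X !sumr_const => Y.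
  by rewrite !mulr_natl Y.
have s0 : \sum_(j in players h) d j = 0.
  by rewrite /d sumrB (cbP h hc) (cbE h hc) subrr.
have Li : 0 < (L i)%:R :> R.
  rewrite ltr0n lt0n cards_eq0; apply/set0Pn.
  case/playersP: ip => l lE il; exists l; by rewrite inE lE.
have pos : 0 < \sum_(j in players h) (L j)%:R :> R.
  rewrite (bigD1 i) //=; apply: lt_le_trans Li _; rewrite lerDl.
  by apply: sumr_ge0 => j _; rewrite ler0n.
have : d i * \sum_(j in players h) (L j)%:R = 0.
  rewrite mulr_sumr; under eq_bigr do rewrite mulrC key.
  by rewrite -mulr_sumr s0 mulr0.
by move/eqP; rewrite mulf_eq0 (gt_eqF pos) orbF => /eqP.
Qed.

End Main.

Theorem mainTheorem3 (n : nat) (R : realFieldType) :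
  (* (i) *)
  [/\ is_allocation_rule (@expected_position_value n R),
      (forall v rho : network n -> R, in_D v rho ->
         component_balanced (@expected_position_value n R) v rho /\
         balanced_link_contributions (@expected_position_value n R) v rho) &
  (* (ii) *)
      forall Psi : alloc n R,
        is_allocation_rule Psi ->
        (forall v rho : network n -> R, in_D v rho ->
           component_balanced Psi v rho /\ balanced_link_contributions Psi v rho) ->
        forall v rho : network n -> R, in_D v rho ->
          forall i : 'I_n, Psi v rho i = expected_position_value v rho i].
Proof.
split; [exact: epv_alloc | exact: epv_cb_blc |].
move=> Psi alloc H v rho D.
suff: forall k rho, (#|extent rho| <= k)%N -> in_D v rho ->
   forall i, Psi v rho i = expected_position_value v rho i by apply.
elim=> [|k IHk] rho' le D'.
  apply: (step alloc H D') => l lE.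
  by move: le; rewrite leqn0 cards_eq0 => /eqP E0; rewrite E0 inE in lE.
apply: (step alloc H D') => l lE; apply: IHk.
  have := subset_leq_card (ext_remove l (let: And3 _ p _ := D' in p)).
  rewrite (cardsD1 l (extent rho')) lE add1n in le; move=> H1.
  apply: leq_trans H1 _; by rewrite -ltnS.
case: D' => v0 p ca; split => //; exact: prob_remove.
Qed.
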